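(* Let $q$ be a prime and $1\le K<N$ with $q^K>2$. Let $G$ ($K\times N$) and $\mathbf{v}\in\mathbb{F}_q^N$ have independent uniformly distributed entries in $\mathbb{F}_q$, and for each message index $m$ let $\mathbf{x}_m=\mathbf{u}_mG+\mathbf{v}$, where $\mathbf{u}_m\in\mathbb{F}_q^K$ is the $q$-ary representation of $m$. Let $P_N(\mathbf{y}\mid\mathbf{x})$ be a channel transition probability from inputs $\mathbf{x}\in\mathbb{F}_q^N$ to outputs $\mathbf{y}$ in a finite set. For an input $\mathbf{x}$ and output $\mathbf{y}$ let $A(\mathbf{x},\mathbf{y})=\{\mathbf{x}'\in\mathbb{F}_q^N: P_N(\mathbf{y}\mid\mathbf{x}')\ge P_N(\mathbf{y}\mid\mathbf{x})\}$. Let $m,m',m''$ be distinct indices, fix a value $\mathbf{x}_m\in\mathbb{F}_q^N$ of the codeword of index $m$ and an output $\mathbf{y}$, and let $A_{j}(\mathbf{x}_m,\mathbf{y})$ denote the event $\{\mathbf{x}_j\in A(\mathbf{x}_m,\mathbf{y})\}$, probabilities being taken over the ensemble conditioned on the codeword of index $m$ being $\mathbf{x}_m$. Let $\alpha=\Pr(A_{m'}(\mathbf{x}_m,\mathbf{y}))$. Then: (i) if $\mathbf{u}_m\notin\mathrm{span}^*(\mathbf{u}_{m'},\mathbf{u}_{m''})$, then $\Pr(A_{m'}(\mathbf{x}_m,\mathbf{y})\cap A_{m''}(\mathbf{x}_m,\mathbf{y}))=\alpha^2$; (ii) if $\mathbf{u}_m\in\mathrm{span}^*(\mathbf{u}_{m'},\mathbf{u}_{m''})$,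 then $\Pr(A_{m'}(\mathbf{x}_m,\mathbf{y})\cap A_{m''}(\mathbf{x}_m,\mathbf{y}))\le\alpha$. Moreover $|\mathrm{span}^*(\mathbf{u}_{m'},\mathbf{u}_{m''})|=q$.
   Context: All operations are mod $q$. $\mathrm{span}^*(\mathbf{w}_1,\mathbf{w}_2)=\mathbf{w}_1+\mathrm{span}(\mathbf{w}_2-\mathbf{w}_1)$, the affine line through $\mathbf{w}_1,\mathbf{w}_2$ in $\mathbb{F}_q^K$. *)

(* Defs.v *)
From HB Require Import structures.
From mathcomp Require Import all_boot all_order all_algebra.
Set Implicit Arguments. Unset Strict Implicit. Unset Printing Implicit Defensive.
Import Order.TTheory GRing.Theory Num.Theory.
Local Open Scope ring_scope.

Definition uvec (q K : nat) (m : nat) : 'rV['F_q]_K :=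
  \row_(i < K) (((m %/ q ^ i) %% q)%N)%:R.

Definition spanstar (q K : nat) (w1 w2 : 'rV['F_q]_K) : {set 'rV['F_q]_K} :=
  [set w1 + c *: (w2 - w1) | c : 'F_q].

(* the ensemble: a pair (G, v), G : K x N generator, v : dither vector *)
Definition ens (q K N : nat) : finType :=
  ('M['F_q]_(K, N) * 'rV['F_q]_N)%type.

Definition codeword (q K N : nat) (u : 'rV['F_q]_K) (p : ens q K N) : 'rV['F_q]_N :=
  u *m p.1 + p.2.

Definition Aset (R : realFieldType) (q N : nat) (Y : finType)
  (P : 'rV['F_q]_N -> Y -> R) (x : 'rV['F_q]_N) (y : Y) : {set 'rV['F_q]_N} :=
  [set x' | P x y <= P x' y].

(* probability of event E under the uniform ensemble, conditioned on the
   codeword with information vector um being equal to a *)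
Definition condPr (R : realFieldType) (q K N : nat) (um : 'rV['F_q]_K)
  (a : 'rV['F_q]_N) (E : pred (ens q K N)) : R :=
  (#|[set p : ens q K N | (codeword um p == a) && E p]|%:R /
   #|[set p : ens q K N | codeword um p == a]|%:R).

(* Main.v *)
Require Import Defs.
From HB Require Import structures.
From mathcomp Require Import all_boot all_order all_algebra.
From mathcomp Require Import zify ring.
Import Order.TTheory GRing.Theory Num.Theory.
Local Open Scope ring_scope.


Lemma digits_inj (q K : nat) (m m' : nat) : (0 < q)%N ->
  (m < q ^ K)%N -> (m' < q ^ K)%N ->
  (forall i, (i < K)%N -> (m %/ q ^ i) %% q = (m' %/ q ^ i) %% q)%N -> m = m'.
Proof.
move=> q0; elim: K m m' => [|K IH] m m'.
  by rewrite expn0 !ltnS !leqn0 => /eqP -> /eqP ->.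
move=> hm hm' hd.
have h0 := hd 0%N isT; rewrite expn0 !divn1 in h0.
have e : (m %/ q = m' %/ q)%N.
  apply: IH.
  - by rewrite ltn_divLR // -expnSr.
  - by rewrite ltn_divLR // -expnSr; idtac.
  move=> i hi; rewrite -!divnMA -expnS; exact: hd.
by rewrite (divn_eq m q) (divn_eq m' q) e h0.
Qed.

Lemma uvec_inj (q K : nat) (m m' : 'I_(q ^ K)) : prime q ->
  uvec q K m = uvec q K m' -> m = m'.
Proof.
move=> hq e; apply: val_inj; apply: (@digits_inj q K);
  [exact: prime_gt0 | exact: ltn_ord | exact: ltn_ord | ].
move=> i hi; have := congr1 (fun u : 'rV['F_q]_K => u 0 (Ordinal hi)) e.
  rewrite /uvec !mxE /= => /(congr1 (@nat_of_ord _)).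
  by rewrite !(val_Fp_nat hq) !modn_mod.
Qed.


Lemma fiber_count (F : finFieldType) (K N k : nat) (D : 'M[F]_(k, K)) (E : 'M[F]_(K, k))
  (hDE : D *m E = 1%:M) (S : pred 'M[F]_(k, N)) :
  (#|[set G : 'M[F]_(K, N) | S (D *m G)]| * #|{: 'M[F]_(k, N)}|
   = #|{: 'M[F]_(K, N)}| * #|[set H | S H]|)%N.
Proof.
have fib : forall H : 'M[F]_(k, N),
    #|[set G : 'M[F]_(K, N) | D *m G == H]| = #|[set G : 'M[F]_(K, N) | D *m G == 0]|.
  move=> H.
  have -> : [set G : 'M[F]_(K, N) | D *m G == H]
          = (fun G => G + E *m H) @: [set G : 'M[F]_(K, N) | D *m G == 0].
    apply/setP => G; rewrite inE; apply/idP/imsetP.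
      move/eqP=> h; exists (G - E *m H); last by rewrite subrK.
      by rewrite inE mulmxBr mulmxA hDE mul1mx h subrr.
    case=> G0; rewrite inE => /eqP h ->.
    by rewrite mulmxDr mulmxA hDE mul1mx h add0r.
  apply: card_imset; exact: addIr.
have key : forall S' : pred 'M[F]_(k, N),
    #|[set G : 'M[F]_(K, N) | S' (D *m G)]|
    = (#|[set H | S' H]| * #|[set G : 'M[F]_(K, N) | D *m G == 0%R]|)%N.
  move=> S'.
  rewrite -[LHS]sum1_card -[RHS]sum_nat_const.
  rewrite (eq_bigl (fun G => S' (D *m G))); last by move=> G; rewrite inE.
  rewrite (partition_big (fun G => D *m G) S') //.
  rewrite [RHS](eq_bigl S'); last by move=> H; rewrite inE.
  apply: eq_bigr => H SH.
  rewrite -(fib H) -sum1_card; apply: eq_bigl => G; rewrite inE.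
  by case: eqP => [->|]; rewrite ?SH ?andbF.
rewrite key.
have := key predT.
have -> : [set G : 'M[F]_(K, N) | predT (D *m G)] = setT.
  apply/setP => G; by rewrite !inE.
have -> : [set H : 'M[F]_(k, N) | predT H] = setT.
  by apply/setP => G; rewrite !inE.
move=> e; rewrite !cardsT in e. rewrite e mulnAC [RHS]mulnC [RHS]mulnA. done.
Qed.


Lemma prod_count (F : finType) (N : nat) (P Q : pred 'rV[F]_N) :
  #|[set H : 'M[F]_(1 + 1, N) | P (usubmx H) && Q (dsubmx H)]|
  = (#|[set a | P a]| * #|[set b | Q b]|)%N.
Proof.
rewrite -cardsX.
have -> : [set H : 'M[F]_(1 + 1, N) | P (usubmx H) && Q (dsubmx H)]
   = (fun p => col_mx p.1 p.2) @: setX [set a | P a] [set b | Q b].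
  apply/setP => H; rewrite inE; apply/idP/imsetP.
    move=> /andP[hP hQ]; exists (usubmx H, dsubmx H); last by rewrite vsubmxK.
    by rewrite !inE hP hQ.
  case=> [[a b]]; rewrite !inE /= => /andP[ha hb] ->.
  by rewrite col_mxKu col_mxKd ha hb.
apply: card_imset => [[a b] [a' b']] /= /eq_col_mx [-> ->] //.
Qed.

Lemma cond_count (q K N : nat) (um : 'rV['F_q]_K) (a : 'rV['F_q]_N)
  (E : pred (ens q K N)) :
  #|[set p : ens q K N | (codeword um p == a) && E p]|
  = #|[set G : 'M['F_q]_(K, N) | E (G, a - um *m G)]|.
Proof.
rewrite -(@card_imset _ (ens q K N) (fun G => (G, a - um *m G))); last first.
  by move=> G G' /(congr1 fst).
apply: eq_card => p; rewrite inE; apply/idP/imsetP.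
  move=> /andP[/eqP hc hE]; exists p.1.
    rewrite inE; move: hE; have -> : (p.1, a - um *m p.1) = p => //.
    by case: p hc => G v /=; rewrite /codeword /= => <-; rewrite addrC addKr.
  by case: p hc {hE} => G v /=; rewrite /codeword /= => <-; rewrite addrC addKr.
case=> G; rewrite inE => hE ->; rewrite hE andbT /codeword /=.
by rewrite addrC subrK.
Qed.


Lemma rinv (q K : nat) (um u1 u2 : 'rV['F_q]_K) :
  um \notin spanstar u1 u2 -> u1 != u2 ->
  exists E : 'M['F_q]_(K, 1 + 1), col_mx (u1 - um) (u2 - um) *m E = 1%:M.
Proof.
move=> hns h12.
apply/row_freeP; rewrite -kermx_eq0; apply: contraT => /rowV0Pn [v /sub_kermxP hv vn0].
rewrite -[v](@hsubmxK _ 1 1 1) mul_row_col [lsubmx v]mx11_scalar [rsubmx v]mx11_scalar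
  !mul_scalar_mx in hv.
move: vn0; rewrite -[v](@hsubmxK _ 1 1 1) [lsubmx v]mx11_scalar [rsubmx v]mx11_scalar.
move: hv; set a := lsubmx v 0 0; set b := rsubmx v 0 0 => hv vn0.
have hvj : forall j, a * (u1 0 j - um 0 j) + b * (u2 0 j - um 0 j) = 0.
  by move=> j; have := congr1 (fun w : 'rV['F_q]_K => w 0 j) hv; rewrite !mxE.
case: (eqVneq (a + b) 0) => hab.
  have eb : b = - a by apply/eqP; rewrite -addr_eq0 addrC hab.
  case: (eqVneq a 0) => ha.
    by move: vn0; rewrite eb ha oppr0 !raddf0 row_mx0 eqxx.
  suff: u1 == u2 by rewrite (negbTE h12).
  apply/eqP/rowP => j.
  have := hvj j; rewrite eb => h.
  have : a * (u1 0 j - u2 0 j) = 0 by rewrite -h; ring.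
  by move/eqP; rewrite mulf_eq0 (negbTE ha) /= subr_eq0 => /eqP.
suff: um \in spanstar u1 u2 by rewrite (negbTE hns).
apply/imsetP; exists (b / (a + b)) => //.
apply/rowP => j; rewrite !mxE.
have h := hvj j.
have e : um 0 j = (a * u1 0 j + b * u2 0 j) / (a + b).
  apply: (mulIf hab); rewrite mulfVK //.
  by rewrite -[RHS]subr0 -h; ring.
rewrite e; field; exact: hab.
Qed.



Lemma condPr_eq (R : realFieldType) (q K N : nat) (um : 'rV['F_q]_K) (a : 'rV['F_q]_N)
  (E : pred (ens q K N)) :
  condPr R um a E = #|[set G : 'M['F_q]_(K, N) | E (G, a - um *m G)]|%:R
                    / #|{: 'M['F_q]_(K, N)}|%:R.
Proof.
rewrite /condPr cond_count.
have -> : [set p : ens q K N | codeword um p == a]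
        = [set p : ens q K N | (codeword um p == a) && predT p].
  by apply/setP => p; rewrite !inE andbT.
rewrite cond_count.
have -> : [set G : 'M['F_q]_(K, N) | predT ((G, a - um *m G) : ens q K N)] = setT.
  by apply/setP => G; rewrite !inE.
by rewrite cardsT; congr (_ / _).
Qed.

Lemma cw_shift (q K N : nat) (um uj : 'rV['F_q]_K) (a : 'rV['F_q]_N) G :
  codeword uj ((G, a - um *m G) : ens q K N) = (uj - um) *m G + a.
Proof. by rewrite /codeword /= mulmxBl -addrA (addrC a). Qed.

Theorem lemma1 (R : realFieldType) (q K N : nat) (Y : finType)
  (P : 'rV['F_q]_N -> Y -> R)
  (hq : prime q) (hK : (1 <= K)%N) (hKN : (K < N)%N) (hqK : (2 < q ^ K)%N)
  (P_ge0 : forall x y, 0 <= P x y)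
  (P_sum1 : forall x, \sum_(y : Y) P x y = 1)
  (m m' m'' : 'I_(q ^ K))
  (hmm' : m != m') (hmm'' : m != m'') (hm'm'' : m' != m'')
  (xm : 'rV['F_q]_N) (y : Y) :
  let um := uvec q K m in
  let um' := uvec q K m' in
  let um'' := uvec q K m'' in
  let A := Aset P xm y in
  let alpha := condPr R um xm (fun p => codeword um' p \in A) in
  let both := condPr R um xm
                (fun p => (codeword um' p \in A) && (codeword um'' p \in A)) in
  (um \notin spanstar um' um'' -> both = alpha ^+ 2) /\
  (um \in spanstar um' um'' -> both <= alpha) /\
  #|spanstar um' um''| = q.
Proof.
move=> um um' um'' A alpha both.
have hu12 : um' != um''.
  by apply: contra hm'm'' => /eqP e; apply/eqP; exact: uvec_inj hq e.
have hA : alpha = #|[set G : 'M['F_q]_(K, N) | (um' - um) *m G + xm \in A]|%:R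
                  / #|{: 'M['F_q]_(K, N)}|%:R.
  rewrite /alpha condPr_eq; congr (_ / _); congr (_%:R).
  by apply: eq_card => G; rewrite !inE cw_shift.
have hB : both = #|[set G : 'M['F_q]_(K, N) | ((um' - um) *m G + xm \in A)
                      && ((um'' - um) *m G + xm \in A)]|%:R
                  / #|{: 'M['F_q]_(K, N)}|%:R.
  rewrite /both condPr_eq; congr (_ / _); congr (_%:R).
  by apply: eq_card => G; rewrite !inE !cw_shift.
split; [|split].
- move=> hns.
  have [E hE] := @rinv q K _ _ _ hns hu12.
  set D := col_mx (um' - um) (um'' - um) in hE.
  have f2 := @fiber_count _ K N _ _ _ hE (fun H => (usubmx H + xm \in A) && (dsubmx H + xm \in A)).
  have f1 := @fiber_count _ K N _ _ _ hE (fun H => (usubmx H + xm \in A) && predT (dsubmx H)).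
  have p2 := @prod_count _ N (fun a => a + xm \in A) (fun b => b + xm \in A).
  have p1 := @prod_count _ N (fun a => a + xm \in A) (@predT 'rV['F_q]_N).
  have p0 := @prod_count _ N (@predT 'rV['F_q]_N) (@predT 'rV['F_q]_N).
  set M := #|{: 'M['F_q]_(K, N)}| in hA hB f1 f2.
  set T := #|{: 'M['F_q]_(1 + 1, N)}| in f1 f2.
  set F := #|[set a : 'rV['F_q]_N | a + xm \in A]| in p1 p2.
  set r := #|[set b : 'rV['F_q]_N | predT b]| in p0 p1.
  set cA := #|[set G : 'M['F_q]_(K, N) | (um' - um) *m G + xm \in A]| in hA.
  set cB := #|[set G : 'M['F_q]_(K, N) | ((um' - um) *m G + xm \in A)
                      && ((um'' - um) *m G + xm \in A)]| in hB.
  have e2 : (cB * T = M * (F * F))%N.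
    rewrite -p2 -f2; congr (_ * _)%N; apply: eq_card => G.
    by rewrite !inE mul_col_mx col_mxKu col_mxKd.
  have e1 : (cA * T = M * (F * r))%N.
    rewrite -p1 -f1; congr (_ * _)%N; apply: eq_card => G.
    by rewrite !inE mul_col_mx col_mxKu ?col_mxKd ?andbT.
  have e0 : T = (r * r)%N.
    rewrite -p0 /T -cardsT; apply: eq_card => H; by rewrite !inE.
  have r0 : (0 < r)%N by apply/card_gt0P; exists 0; rewrite inE.
  have M0 : (0 < M)%N by apply/card_gt0P; exists 0.
  have hr : (r%:R : R) != 0 by rewrite pnatr_eq0 -lt0n.
  have hM : (M%:R : R) != 0 by rewrite pnatr_eq0 -lt0n.
  rewrite e0 in e1 e2.
  have e2R := congr1 (fun n => n%:R : R) e2.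
  have e1R := congr1 (fun n => n%:R : R) e1.
  rewrite /= !natrM in e2R e1R.
  have eB : (cB%:R : R) = M%:R * (F%:R * F%:R) / (r%:R * r%:R).
    by rewrite -e2R mulfK // mulf_neq0.
  have eA : (cA%:R : R) = M%:R * (F%:R * r%:R) / (r%:R * r%:R).
    by rewrite -e1R mulfK // mulf_neq0.
  rewrite hA hB eA eB.
  by field; rewrite hM hr.
- move=> _; rewrite hA hB; apply: ler_wpM2r; first by rewrite invr_ge0 ler0n.
  rewrite ler_nat; apply: subset_leq_card; apply/subsetP => G; rewrite !inE.
  by case/andP.
- rewrite /spanstar card_imset ?card_Fp //.
  move=> c c' /addrI /eqP; rewrite -subr_eq0 -scalerBl scaler_eq0 subr_eq0.
  by rewrite subr_eq0 [um'' == _]eq_sym (negbTE hu12) orbF => /eqP.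
Qed.
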